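(* Let $\mathcal{D}$ be a combinatorial description of a simple pseudoline arrangement. Then there is a line arrangement realizing $\mathcal{D}$ in the Euclidean plane $\mathbb{R}^2$ if and only if there is a line arrangement realizing $\mathcal{D}$ in the hyperbolic plane $\mathbb{H}^2$.
   Context: A pseudoline arrangement $\mathcal{A}$ is a collection of pseudolines ($x$-monotone curves in $\mathbb{R}^2$) such that each pair of curves intersects at most once. Each pseudoline $\ell\in\mathcal{A}$ is oriented and thus divides the plane into two open half-planes $\ell^-$ and $\ell^+$. The arrangement is simple if any two (pseudo)lines intersect exactly once and no three intersect in the same point. For $\mathcal{A}=\{\ell_1,\dots,\ell_n\}$, each point $p$ gets a sign vector $\sigma(p)=(\sigma_i(p))_{i=1}^n\in\{-,0,+\}^n$, where $\sigma_i(p)=-$ if $p\in\ell_i^-$, $0$ if $p\in\ell_i$, and $+$ if $p\in\ell_i^+$. The combinatorial description $\mathcal{D}$ of $\mathcal{A}$ is the set $\{\sigma(p)\mid p\in\mathbb{R}^2\}$, and an arrangement with this set of sign vectors is said to realize $\mathcal{D}$. A line arrangement in $\mathbb{H}^2$ is an arrangement of (oriented) hyperbolic lines, with sign vectors and combinatorial description defined analogously over points of $\mathbb{H}^2$. *)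

(* Defs.v *)
From Stdlib Require Import Reals.
From mathcomp Require Import ssreflect ssrbool eqtype ssrnat fintype.
Set Implicit Arguments.
Unset Strict Implicit.
Open Scope R_scope.

Inductive sgn := Neg | Zero | Pos.

Definition sgnR (x : R) : sgn :=
  if Rlt_dec x 0 then Neg else if Rlt_dec 0 x then Pos else Zero.

Definition sgn_opp (s : sgn) : sgn :=
  match s with Neg => Pos | Zero => Zero | Pos => Neg end.

(* ---------- Pseudolines in R^2 ----------
   An (unbounded, x-monotone) pseudoline is the graph of a continuous
   function f : R -> R. *)
Record pseudoline := Pseudoline {
  pl_f : R -> R;
  pl_cont : continuity pl_f;
  pl_up : bool }.

Definition pl_sign (l : pseudoline) (p : R * R) : sgn :=
  let s := sgnR (snd p - pl_f l (fst p)) in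
  if pl_up l then s else sgn_opp s.

Definition simple_pl_arr (n : nat) (L : 'I_n -> pseudoline) : Prop :=
  (forall i j : 'I_n, i <> j ->
     exists x : R, pl_f (L i) x = pl_f (L j) x /\
       forall x' : R, pl_f (L i) x' = pl_f (L j) x' -> x' = x) /\
  (forall i j k : 'I_n, i <> j -> j <> k -> i <> k ->
     forall x : R, ~ (pl_f (L i) x = pl_f (L j) x /\ pl_f (L j) x = pl_f (L k) x)).

Record eline := ELine {
  el_a : R; el_b : R; el_c : R;
  el_nondeg : el_a <> 0 \/ el_b <> 0 }.

Definition el_sign (l : eline) (p : R * R) : sgn :=
  sgnR (el_a l * fst p + el_b l * snd p + el_c l).

(* ---------- Oriented lines in the hyperbolic plane H^2 ----------
   Hyperboloid model: H^2 = {(x,y,z) | x^2 + y^2 - z^2 = -1, z > 0}.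
   Hyperbolic lines are the (nonempty) intersections of H^2 with planes
   {a x + b y + c z = 0} through the origin, which meet H^2 iff
   c^2 < a^2 + b^2; positive side {a x + b y + c z > 0}. *)
Definition in_H2 (p : R * R * R) : Prop :=
  let '(x, y, z) := p in x * x + y * y - z * z = -1 /\ 0 < z.

Record hline := HLine {
  hl_a : R; hl_b : R; hl_c : R;
  hl_meets : hl_c * hl_c < hl_a * hl_a + hl_b * hl_b }.

Definition hl_sign (l : hline) (p : R * R * R) : sgn :=
  let '(x, y, z) := p in sgnR (hl_a l * x + hl_b l * y + hl_c l * z).

Definition comb_desc (n : nat) := ('I_n -> sgn) -> Prop.

Definition pl_realizes (n : nat) (L : 'I_n -> pseudoline) (D : comb_desc n) : Prop :=
  forall v : 'I_n -> sgn,
    D v <-> exists p : R * R, forall i : 'I_n, v i = pl_sign (L i) p.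

Definition euclid_realizes (n : nat) (L : 'I_n -> eline) (D : comb_desc n) : Prop :=
  forall v : 'I_n -> sgn,
    D v <-> exists p : R * R, forall i : 'I_n, v i = el_sign (L i) p.

Definition hyp_realizes (n : nat) (L : 'I_n -> hline) (D : comb_desc n) : Prop :=
  forall v : 'I_n -> sgn,
    D v <-> exists p : R * R * R, in_H2 p /\ forall i : 'I_n, v i = hl_sign (L i) p.

(* Main.v *)
Require Import Defs.
From Stdlib Require Import Reals.
From mathcomp Require Import ssreflect ssrbool eqtype ssrnat fintype.
From mathcomp Require Import seq.
From Stdlib Require Import Lra Psatz Classical.
Open Scope R_scope.

Lemma sgnR_pos x : 0 < x -> sgnR x = Pos.
Proof. intro H; unfold sgnR; destruct (Rlt_dec x 0); [lra|]; destruct (Rlt_dec 0 x); [auto|lra]. Qed.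
Lemma sgnR_neg x : x < 0 -> sgnR x = Neg.
Proof. intro H; unfold sgnR; destruct (Rlt_dec x 0); [auto|lra]. Qed.
Lemma sgnR_zero : sgnR 0 = Zero.
Proof. unfold sgnR; destruct (Rlt_dec 0 0); [lra|]; destruct (Rlt_dec 0 0); [lra|auto]. Qed.
Lemma sgnR_Zero x : sgnR x = Zero -> x = 0.
Proof. unfold sgnR; destruct (Rlt_dec x 0); [discriminate|]; destruct (Rlt_dec 0 x); [discriminate|]; lra. Qed.
Lemma sgnR_same x y : (x = 0 /\ y = 0) \/ 0 < x * y -> sgnR x = sgnR y.
Proof.
  intros [[-> ->]|H]; [reflexivity|].
  destruct (Rlt_or_le x 0).
  - rewrite (sgnR_neg x) // (sgnR_neg y) //. nra.
  - assert (0 < x) by (destruct H0; [auto| subst; nra]).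
    rewrite (sgnR_pos x) // (sgnR_pos y) //. nra.
Qed.
Lemma sgnR_scale s k : 0 < k -> sgnR (s * k) = sgnR s.
Proof.
  intro Hk; apply sgnR_same. destruct (Req_dec s 0) as [->|Hs].
  - left; split; ring.
  - right. assert (0 < s * s) by nra. nra.
Qed.

Lemma seq_bound (T : eqType) (s : seq T) (f : T -> R) :
  exists M, forall x, x \in s -> f x <= M.
Proof.
  elim: s => [|a s [M HM]].
  - exists 0. move=> x; by rewrite in_nil.
  - exists (Rmax (f a) M). move=> x; rewrite in_cons => /orP [/eqP->|/HM H].
    + apply Rmax_l.
    + eapply Rle_trans; [exact H| apply Rmax_r].
Qed.

Lemma seq_bound2 (T : eqType) (s1 s2 : seq T) (f : T -> T -> R) :
  exists M, forall x y, x \in s1 -> y \in s2 -> f x y <= M.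
Proof.
  elim: s1 => [|a s [M HM]].
  - exists 0. move=> x y; by rewrite in_nil.
  - have [M2 HM2] := @seq_bound _ s2 (f a).
    exists (Rmax M2 M). move=> x y; rewrite in_cons => /orP [/eqP->|/HM H] Hy.
    + eapply Rle_trans; [apply HM2, Hy| apply Rmax_l].
    + eapply Rle_trans; [exact (H y Hy)| apply Rmax_r].
Qed.

Lemma ord_bound2 n (f : 'I_n -> 'I_n -> R) : exists M, forall i j, f i j <= M.
Proof.
  have [M HM] := @seq_bound2 _ (ord_enum n) (ord_enum n) f.
  exists M => i j; apply HM; apply mem_ord_enum.
Qed.

Lemma seq_argmin (T : eqType) (s : seq T) (P : T -> Prop) (h : T -> R) :
  (exists x, x \in s /\ P x) ->
  exists k, P k /\ forall k', k' \in s -> P k' -> h k <= h k'.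
Proof.
  elim: s => [|a s IH].
  - move=> [x [Hx _]]; by rewrite in_nil in Hx.
  - move=> Hex. destruct (classic (exists x, x \in s /\ P x)) as [Hs|Hs].
    + have [k [Pk Hk]] := IH Hs.
      destruct (classic (P a /\ h a < h k)) as [[Pa Ha]|Hn].
      * exists a; split; [exact Pa|]. move=> k'; rewrite in_cons => /orP [/eqP->|Hk'] Pk'.
        -- apply Rle_refl.
        -- have := Hk k' Hk' Pk'; lra.
      * exists k; split; [exact Pk|]. move=> k'; rewrite in_cons => /orP [/eqP->|Hk'] Pk'.
        -- destruct (Rlt_or_le (h a) (h k)); [exfalso; apply Hn; tauto| auto].
        -- exact (Hk k' Hk' Pk').
    + have Pa : P a.
      { destruct Hex as [x [Hx Px]]. move: Hx; rewrite in_cons => /orP [/eqP Hx|Hx].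
        - by subst.
        - exfalso; apply Hs; exists x; tauto. }
      exists a; split; [exact Pa|]. move=> k'; rewrite in_cons => /orP [/eqP->|Hk'] Pk'.
      * apply Rle_refl.
      * exfalso; apply Hs; exists k'; tauto.
Qed.

Lemma ord_argmin n (P : 'I_n -> Prop) (h : 'I_n -> R) :
  (exists x, P x) -> exists k, P k /\ forall k', P k' -> h k <= h k'.
Proof.
  move=> [x Px]. have [|k [Pk Hk]] := @seq_argmin _ (ord_enum n) P h.
  - exists x; split; [apply mem_ord_enum| exact Px].
  - exists k; split; [exact Pk|]. move=> k' Pk'; apply Hk; [apply mem_ord_enum| exact Pk'].
Qed.

Definition Fl (a b c x y : R) := a * x + b * y + c.
Definition indisk (x y : R) := x * x + y * y < 1.
Definition prealizes n (Dom : R -> R -> Prop) (A B C : 'I_n -> R) (D : comb_desc n) :=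
  forall v, D v <-> exists x y, Dom x y /\ forall i, v i = sgnR (Fl (A i) (B i) (C i) x y).
Arguments prealizes {n}.

Lemma Fl_move a b c x y t dx dy :
  Fl a b c (x + t * dx) (y + t * dy) = Fl a b c x y + t * (a * dx + b * dy).
Proof. unfold Fl; ring. Qed.

Lemma step n (A B C : 'I_n -> R) x y dx dy i0 :
  A i0 * dx + B i0 * dy <> 0 ->
  exists t j, A j * dx + B j * dy <> 0 /\
    Fl (A j) (B j) (C j) (x + t * dx) (y + t * dy) = 0 /\
    forall k, Fl (A k) (B k) (C k) (x + t * dx) (y + t * dy) = 0 \/
      0 < Fl (A k) (B k) (C k) (x + t * dx) (y + t * dy) * Fl (A k) (B k) (C k) x y.
Proof.
  move=> Hi0.
  have [j [Hj Hmin]] := @ord_argmin n (fun k => A k * dx + B k * dy <> 0)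
     (fun k => (Fl (A k) (B k) (C k) x y / (A k * dx + B k * dy)) ^ 2) (ex_intro _ i0 Hi0).
  exists (- (Fl (A j) (B j) (C j) x y / (A j * dx + B j * dy))), j.
  split; [exact Hj|]. split.
  - rewrite Fl_move. field. exact Hj.
  - move=> k. rewrite Fl_move.
    set t := - (Fl (A j) (B j) (C j) x y / (A j * dx + B j * dy)).
    set u := Fl (A k) (B k) (C k) x y.
    set g := A k * dx + B k * dy.
    destruct (Req_dec g 0) as [Hg|Hg].
    + rewrite Hg. destruct (Req_dec u 0) as [Hu|Hu].
      * left; rewrite Hu; ring.
      * right. replace (u + t * 0) with u by ring. nra.
    + have Hm := Hmin k Hg. simpl in Hm.
      assert (T2 : t * t * (g * g) <= u * u).
      { assert (E1 : t * t = (Fl (A j) (B j) (C j) x y / (A j * dx + B j * dy)) ^ 2)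
          by (unfold t; ring).
        assert (E2 : u * u = (u / g) ^ 2 * (g * g)) by (field; exact Hg).
        rewrite E1 E2. apply Rmult_le_compat_r; [nra| exact Hm]. }
      destruct (Req_dec (u + t * g) 0) as [H0|H0]; [left; exact H0| right].
      apply Rnot_le_lt; intro Hle.
      assert (0 < (u + t * g) * (u + t * g)) by nra.
      nra.
Qed.

Lemma cl_trans u v w : (v = 0 \/ 0 < v * u) -> (w = 0 \/ 0 < w * v) -> (w = 0 \/ 0 < w * u).
Proof.
  intros H1 [H2|H2]; [left; exact H2| right].
  destruct H1 as [->|H1]; [nra|].
  assert (0 < v * v) by (destruct (Req_dec v 0) as [->|]; nra).
  assert (0 < (w * v) * (v * u)) by nra.
  nra.
Qed.

Lemma shrink n (A B C : 'I_n -> R) x y wx wy :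
  indisk wx wy ->
  (forall k, Fl (A k) (B k) (C k) wx wy = 0 \/ 0 < Fl (A k) (B k) (C k) wx wy * Fl (A k) (B k) (C k) x y) ->
  exists x' y', indisk x' y' /\ forall k, sgnR (Fl (A k) (B k) (C k) x' y') = sgnR (Fl (A k) (B k) (C k) x y).
Proof.
  unfold indisk. move=> Hw Hcl.
  set dx := x - wx. set dy := y - wy.
  set del := 1 - (wx * wx + wy * wy).
  set P := wx * dx + wy * dy.
  set Cc := P * P + 1 + (dx * dx + dy * dy).
  have Hdel : 0 < del by (unfold del; lra).
  have Hdel1 : del <= 1 by (unfold del; nra).
  have HC : 1 <= Cc by (unfold Cc; nra).
  set e := del / (2 * Cc).
  have He : e * (2 * Cc) = del by (unfold e; field; lra).
  have He0 : 0 < e by (unfold e; apply Rdiv_lt_0_compat; lra).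
  have He1 : e <= 1 / 2 by nra.
  exists (wx + e * dx), (wy + e * dy). split.
  - have E : (wx + e * dx) * (wx + e * dx) + (wy + e * dy) * (wy + e * dy)
       = (wx * wx + wy * wy) + 2 * e * P + e * e * (dx * dx + dy * dy) by (unfold P; ring).
    rewrite E.
    have H1 : 2 * e * P <= e * (P * P + 1).
    { have := Rmult_le_pos e ((P - 1) * (P - 1)) (Rlt_le _ _ He0) (Rle_0_sqr (P - 1)). nra. }
    have H2 : e * e * (dx * dx + dy * dy) <= e * (dx * dx + dy * dy).
    { apply Rmult_le_compat_r; [apply Rplus_le_le_0_compat; apply Rle_0_sqr|].
      have := Rmult_le_compat_l e e (1/2) (Rlt_le _ _ He0) He1. lra. }
    have E3 : e * (P * P + 1) + e * (dx * dx + dy * dy) = del / 2.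
    { rewrite -He. unfold Cc. field. }
    unfold del in E3. lra.
  - move=> k.
    have E : Fl (A k) (B k) (C k) (wx + e * dx) (wy + e * dy)
       = (1 - e) * Fl (A k) (B k) (C k) wx wy + e * Fl (A k) (B k) (C k) x y
       by (unfold Fl, dx, dy; ring).
    rewrite E. apply sgnR_same.
    set u := Fl (A k) (B k) (C k) x y.
    destruct (Hcl k) as [H0|H0]; fold u in H0 |- *.
    + rewrite H0. destruct (Req_dec u 0) as [->|Hu].
      * left; split; ring.
      * right. assert (0 < u * u) by nra. nra.
    + right. set w := Fl (A k) (B k) (C k) wx wy in H0 |- *.
      assert (0 <= u * u) by nra. nra.
Qed.

Lemma cover n (A B C : 'I_n -> R) :
  (forall i, C i * C i < A i * A i + B i * B i) ->
  (forall i j, i <> j -> A i * B j - A j * B i <> 0) ->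
  (forall i j, i <> j -> exists x y, indisk x y /\
      Fl (A i) (B i) (C i) x y = 0 /\ Fl (A j) (B j) (C j) x y = 0) ->
  forall x y, exists x' y', indisk x' y' /\
    forall k, sgnR (Fl (A k) (B k) (C k) x' y') = sgnR (Fl (A k) (B k) (C k) x y).
Proof.
  move=> H1 HA HB x y.
  destruct (classic (exists i0 : 'I_n, True)) as [[i0 _]|Hno].
  2: { apply (@shrink n A B C x y 0 0); [unfold indisk; lra|].
       move=> k; exfalso; apply Hno; exists k; exact I. }
  have Hi0 : A i0 * A i0 + B i0 * B i0 <> 0.
  { have := H1 i0. have := Rle_0_sqr (C i0). unfold Rsqr. lra. }
  have [t1 [j0 [_ [Fj0 cl1]]]] := @step n A B C x y (A i0) (B i0) i0 Hi0.
  set x1 := x + t1 * A i0 in Fj0 cl1. set y1 := y + t1 * B i0 in Fj0 cl1.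
  destruct (classic (exists j1, j1 <> j0)) as [[j1 Hj1]|Hno].
  - have Hg : A j1 * - B j0 + B j1 * A j0 <> 0.
    { have := HA j0 j1 (fun e => Hj1 (Logic.eq_sym e)). lra. }
    have [t2 [j2 [Gj2 [Fj2 cl2]]]] := @step n A B C x1 y1 (- B j0) (A j0) j1 Hg.
    have Hj02 : j0 <> j2.
    { move=> E; subst j2. apply Gj2. ring. }
    have Fj0' : Fl (A j0) (B j0) (C j0) (x1 + t2 * - B j0) (y1 + t2 * A j0) = 0.
    { rewrite Fl_move Fj0. ring. }
    have [qx [qy [Hq [Q0 Q2]]]] := HB j0 j2 Hj02.
    have Hdet := HA j0 j2 Hj02.
    set px := x1 + t2 * - B j0 in Fj2 cl2 Fj0'.
    set py := y1 + t2 * A j0 in Fj2 cl2 Fj0'.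
    have L0 : A j0 * (qx - px) + B j0 * (qy - py) = 0.
    { unfold Fl in Q0, Fj0'. lra. }
    have L2 : A j2 * (qx - px) + B j2 * (qy - py) = 0.
    { unfold Fl in Q2, Fj2. lra. }
    have Ex : (qx - px) * (A j0 * B j2 - A j2 * B j0) = 0.
    { have -> : (qx - px) * (A j0 * B j2 - A j2 * B j0)
        = B j2 * (A j0 * (qx - px) + B j0 * (qy - py)) - B j0 * (A j2 * (qx - px) + B j2 * (qy - py)) by ring.
      rewrite L0 L2; ring. }
    have Ey : (qy - py) * (A j0 * B j2 - A j2 * B j0) = 0.
    { have -> : (qy - py) * (A j0 * B j2 - A j2 * B j0)
        = A j0 * (A j2 * (qx - px) + B j2 * (qy - py)) - A j2 * (A j0 * (qx - px) + B j0 * (qy - py)) by ring.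
      rewrite L0 L2; ring. }
    have Hx : qx = px.
    { destruct (Rmult_integral _ _ Ex) as [E|E]; [lra| contradiction]. }
    have Hy : qy = py.
    { destruct (Rmult_integral _ _ Ey) as [E|E]; [lra| contradiction]. }
    apply (@shrink n A B C x y px py).
    + rewrite -Hx -Hy; exact Hq.
    + move=> k. eapply cl_trans; [exact (cl1 k)| exact (cl2 k)].
  - set N := A j0 * A j0 + B j0 * B j0.
    have HN : 0 < N.
    { have := H1 j0. have := Rle_0_sqr (C j0). unfold Rsqr, N. lra. }
    apply (@shrink n A B C x y (- C j0 * A j0 / N) (- C j0 * B j0 / N)).
    + unfold indisk.
      have -> : - C j0 * A j0 / N * (- C j0 * A j0 / N) + - C j0 * B j0 / N * (- C j0 * B j0 / N)
        = (C j0 * C j0) / N by (unfold N in *; field; lra).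
      apply (Rmult_lt_reg_r N); [exact HN|].
      have -> : C j0 * C j0 / N * N = C j0 * C j0 by (field; lra).
      have := H1 j0. unfold N. lra.
    + move=> k. left.
      have -> : k = j0 by (apply NNPP; move=> Hk; apply Hno; exists k; exact Hk).
      unfold Fl, N in *. field. lra.
Qed.

Lemma pl_sign_zero l p : pl_f l (fst p) = snd p -> pl_sign l p = Zero.
Proof.
  move=> H. unfold pl_sign. rewrite H.
  have -> : snd p - snd p = 0 by ring.
  rewrite sgnR_zero. by case: (pl_up l).
Qed.

Lemma pl_sign_nz l p : pl_f l (fst p) <> snd p -> pl_sign l p <> Zero.
Proof.
  move=> H. unfold pl_sign.
  have Hs : sgnR (snd p - pl_f l (fst p)) <> Zero.
  { move=> /sgnR_Zero E. apply H. lra. }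
  case: (pl_up l); [exact Hs|].
  move: Hs; case: (sgnR _) => //.
Qed.

Lemma from_pl n (L : 'I_n -> pseudoline) (D : comb_desc n) Dom (A B C : 'I_n -> R) :
  simple_pl_arr L -> pl_realizes L D -> prealizes Dom A B C D ->
  (forall i, A i <> 0 \/ B i <> 0) ->
  (forall i j, i <> j -> exists x y, Dom x y /\
      Fl (A i) (B i) (C i) x y = 0 /\ Fl (A j) (B j) (C j) x y = 0) /\
  (forall i j, i <> j -> A i * B j - A j * B i <> 0).
Proof.
  move=> [Hs1 _] HL HR Hnd.
  have P1 : forall i j, i <> j -> exists x y, Dom x y /\
      Fl (A i) (B i) (C i) x y = 0 /\ Fl (A j) (B j) (C j) x y = 0.
  { move=> i j Hij. have [x0 [E0 _]] := Hs1 i j Hij.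
    set p := (x0, pl_f (L i) x0).
    have Dv : D (fun k => pl_sign (L k) p).
    { apply HL. exists p. move=> k; reflexivity. }
    have [x [y [Dxy Hv]]] := proj1 (HR _) Dv.
    exists x, y. split; [exact Dxy|]. split.
    - apply sgnR_Zero. rewrite -(Hv i). apply pl_sign_zero. reflexivity.
    - apply sgnR_Zero. rewrite -(Hv j). apply pl_sign_zero. simpl. by rewrite E0. }
  split; [exact P1|].
  move=> i j Hij Hdet.
  have [qx [qy [_ [Q0i Q0j]]]] := P1 i j Hij.
  have [x0 [E0 U0]] := Hs1 i j Hij.
  set p := (x0 + 1, pl_f (L i) (x0 + 1)).
  have Dv : D (fun k => pl_sign (L k) p).
  { apply HL. exists p. move=> k; reflexivity. }
  have [x [y [_ Hv]]] := proj1 (HR _) Dv.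
  have Fi : Fl (A i) (B i) (C i) x y = 0.
  { apply sgnR_Zero. rewrite -(Hv i). apply pl_sign_zero. reflexivity. }
  have Fj : Fl (A j) (B j) (C j) x y <> 0.
  { move=> E. have := Hv j. rewrite E sgnR_zero. apply pl_sign_nz. simpl.
    move=> E1. have := U0 (x0 + 1) (Logic.eq_sym E1). lra. }
  apply Fj.
  set ex := x - qx. set ey := y - qy.
  have Li : A i * ex + B i * ey = 0 by (unfold Fl in *; unfold ex, ey; lra).
  have Ej : Fl (A j) (B j) (C j) x y = A j * ex + B j * ey
    by (unfold Fl in *; unfold ex, ey; lra).
  rewrite Ej.
  have Ea : A i * (A j * ex + B j * ey) = 0.
  { have -> : A i * (A j * ex + B j * ey) = A j * (A i * ex + B i * ey) + ey * (A i * B j - A j * B i) by ring.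
    rewrite Li Hdet; ring. }
  have Eb : B i * (A j * ex + B j * ey) = 0.
  { have -> : B i * (A j * ex + B j * ey) = B j * (A i * ex + B i * ey) - ex * (A i * B j - A j * B i) by ring.
    rewrite Li Hdet; ring. }
  destruct (Hnd i) as [H|H].
  - destruct (Rmult_integral _ _ Ea); [contradiction| assumption].
  - destruct (Rmult_integral _ _ Eb); [contradiction| assumption].
Qed.

Lemma transfer n (D : comb_desc n) (Dom1 Dom2 : R -> R -> Prop) (A B C A' B' C' : 'I_n -> R) :
  prealizes Dom1 A B C D ->
  (forall x y, Dom1 x y -> exists x' y', Dom2 x' y' /\
     forall i, sgnR (Fl (A' i) (B' i) (C' i) x' y') = sgnR (Fl (A i) (B i) (C i) x y)) ->
  (forall x y, Dom2 x y -> exists x' y', Dom1 x' y' /\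
     forall i, sgnR (Fl (A i) (B i) (C i) x' y') = sgnR (Fl (A' i) (B' i) (C' i) x y)) ->
  prealizes Dom2 A' B' C' D.
Proof.
  move=> HR T12 T21 v. split.
  - move=> /HR [x [y [Hd Hv]]]. have [x' [y' [Hd' Hs]]] := T12 x y Hd.
    exists x', y'. split; [exact Hd'|]. move=> i. by rewrite Hv Hs.
  - move=> [x [y [Hd Hv]]]. have [x' [y' [Hd' Hs]]] := T21 x y Hd.
    apply HR. exists x', y'. split; [exact Hd'|]. move=> i. by rewrite Hv Hs.
Qed.

Lemma euclid_pts n (E : 'I_n -> eline) (D : comb_desc n) :
  euclid_realizes E D <->
  prealizes (fun _ _ => True) (fun i => el_a (E i)) (fun i => el_b (E i)) (fun i => el_c (E i)) D.
Proof.
  split.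
  - move=> HE v. rewrite HE. split.
    + move=> [[x y] Hv]. exists x, y. split; [exact I| exact Hv].
    + move=> [x [y [_ Hv]]]. exists (x, y). exact Hv.
  - move=> HE v. rewrite HE. split.
    + move=> [x [y [_ Hv]]]. exists (x, y). exact Hv.
    + move=> [[x y] Hv]. exists x, y. split; [exact I| exact Hv].
Qed.

Lemma hyp_pts n (H : 'I_n -> hline) (D : comb_desc n) :
  hyp_realizes H D <->
  prealizes indisk (fun i => hl_a (H i)) (fun i => hl_b (H i)) (fun i => hl_c (H i)) D.
Proof.
  have F1 : forall v, (exists p, in_H2 p /\ forall i, v i = hl_sign (H i) p) ->
     exists x y, indisk x y /\ forall i, v i = sgnR (Fl (hl_a (H i)) (hl_b (H i)) (hl_c (H i)) x y).
  { move=> v [[[x y] z] [[Hh Hz] Hv]]. exists (x / z), (y / z). split.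
    - unfold indisk.
      have -> : x / z * (x / z) + y / z * (y / z) = (x * x + y * y) * / (z * z) by (field; lra).
      have Hzz : 0 < z * z by nra.
      apply (Rmult_lt_reg_r (z * z)); [exact Hzz|].
      have -> : (x * x + y * y) * / (z * z) * (z * z) = x * x + y * y by (field; lra).
      lra.
    - move=> i. rewrite Hv. simpl.
      have -> : Fl (hl_a (H i)) (hl_b (H i)) (hl_c (H i)) (x / z) (y / z)
        = (hl_a (H i) * x + hl_b (H i) * y + hl_c (H i) * z) * / z by (unfold Fl; field; lra).
      rewrite sgnR_scale //. apply Rinv_0_lt_compat; exact Hz. }
  have F2 : forall v, (exists x y, indisk x y /\ forall i, v i = sgnR (Fl (hl_a (H i)) (hl_b (H i)) (hl_c (H i)) x y)) ->
     exists p, in_H2 p /\ forall i, v i = hl_sign (H i) p.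
  { move=> v [x [y [Hd Hv]]]. unfold indisk in Hd.
    set s := sqrt (1 - (x * x + y * y)).
    have Hs : 0 < s by (apply sqrt_lt_R0; lra).
    have Hss : s * s = 1 - (x * x + y * y) by (apply sqrt_sqrt; lra).
    exists (x / s, y / s, 1 / s). split.
    - simpl. split.
      + have -> : x / s * (x / s) + y / s * (y / s) - 1 / s * (1 / s) = (x * x + y * y - 1) / (s * s) by (field; lra).
        rewrite Hss. field. lra.
      + apply Rdiv_lt_0_compat; lra.
    - move=> i. rewrite Hv. simpl.
      have -> : hl_a (H i) * (x / s) + hl_b (H i) * (y / s) + hl_c (H i) * (1 / s)
        = Fl (hl_a (H i)) (hl_b (H i)) (hl_c (H i)) x y * / s by (unfold Fl; field; lra).
      rewrite sgnR_scale //. apply Rinv_0_lt_compat; exact Hs. }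
  split.
  - move=> HH v. split.
    + move=> Dv. apply F1. apply HH. exact Dv.
    + move=> Hx. apply HH. apply F2. exact Hx.
  - move=> HH v. split.
    + move=> Dv. apply F2. apply HH. exact Dv.
    + move=> Hx. apply HH. apply F1. exact Hx.
Qed.

Theorem proposition1 (n : nat) (D : comb_desc n) :
  (exists L : 'I_n -> pseudoline, simple_pl_arr L /\ pl_realizes L D) ->
  ((exists E : 'I_n -> eline, euclid_realizes E D) <->
   (exists H : 'I_n -> hline, hyp_realizes H D)).
Proof.
  move=> [L [HsL HL]]. split.
  - move=> [E HE].
    set A := fun i => el_a (E i). set B := fun i => el_b (E i). set C := fun i => el_c (E i).
    have PE : prealizes (fun _ _ => True) A B C D by (apply euclid_pts; exact HE).
    have Hnd : forall i, A i <> 0 \/ B i <> 0 by (move=> i; exact (el_nondeg (E i))).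
    have [HB HA] := from_pl _ _ _ _ _ _ _ HsL HL PE Hnd.
    have HN : forall i, 0 < A i * A i + B i * B i.
    { move=> i. destruct (Hnd i) as [H|H]; have := Rle_0_sqr (A i); have := Rle_0_sqr (B i);
      unfold Rsqr; nra. }
    set X := fun i j => (B i * C j - B j * C i) / (A i * B j - A j * B i).
    set Y := fun i j => (C i * A j - C j * A i) / (A i * B j - A j * B i).
    have [M HM] := @ord_bound2 n
      (fun i j => X i j * X i j + Y i j * Y i j + C i * C i / (A i * A i + B i * B i)).
    set K := Rabs M + 1.
    have HK1 : 1 <= K by (have := Rabs_pos M; unfold K; lra).
    have HKM : M < K by (have := Rle_abs M; unfold K; lra).
    have HKK : K <= K * K by nra.
    set C' := fun i => C i / K.
    have H1 : forall i, C' i * C' i < A i * A i + B i * B i.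
    { move=> i. have Hm := HM i i. simpl in Hm.
      have Hx : 0 <= X i i * X i i + Y i i * Y i i by nra.
      have HNi := HN i.
      set r := C i * C i / (A i * A i + B i * B i) in Hm.
      have Er : r * (A i * A i + B i * B i) = C i * C i by (unfold r; field; lra).
      have Ec : C' i * C' i = r * (A i * A i + B i * B i) / (K * K) by (unfold C'; rewrite Er; field; lra).
      rewrite Ec.
      apply (Rmult_lt_reg_r (K * K)); [nra|].
      have -> : r * (A i * A i + B i * B i) / (K * K) * (K * K) = r * (A i * A i + B i * B i) by (field; lra).
      have : r < K * K by lra.
      nra. }
    have HBd : forall i j, i <> j -> exists x y, indisk x y /\
        Fl (A i) (B i) (C' i) x y = 0 /\ Fl (A j) (B j) (C' j) x y = 0.
    { move=> i j Hij. have Hd := HA i j Hij. exists (X i j / K), (Y i j / K). split; [|split].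
      - unfold indisk. have Hm := HM i j. simpl in Hm.
        have Hc : 0 <= C i * C i / (A i * A i + B i * B i).
        { unfold Rdiv. apply Rmult_le_pos; [nra| apply Rlt_le, Rinv_0_lt_compat, (HN i)]. }
        have -> : X i j / K * (X i j / K) + Y i j / K * (Y i j / K) = (X i j * X i j + Y i j * Y i j) / (K * K) by (field; lra).
        apply (Rmult_lt_reg_r (K * K)); [nra|].
        have -> : (X i j * X i j + Y i j * Y i j) / (K * K) * (K * K) = X i j * X i j + Y i j * Y i j by (field; lra).
        lra.
      - unfold Fl, X, Y, C'. field. split; lra.
      - unfold Fl, X, Y, C'. field. split; lra. }
    have PE' : prealizes (fun _ _ => True) A B C' D.
    { apply (transfer _ _ _ _ _ _ _ _ _ _ PE).
      - move=> x y _. exists (x / K), (y / K). split; [exact I|]. move=> i.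
        have -> : Fl (A i) (B i) (C' i) (x / K) (y / K) = Fl (A i) (B i) (C i) x y * / K
          by (unfold Fl, C'; field; lra).
        apply sgnR_scale. apply Rinv_0_lt_compat; lra.
      - move=> x y _. exists (K * x), (K * y). split; [exact I|]. move=> i.
        have -> : Fl (A i) (B i) (C i) (K * x) (K * y) = Fl (A i) (B i) (C' i) x y * K
          by (unfold Fl, C'; field; lra).
        apply sgnR_scale. lra. }
    have PD : prealizes indisk A B C' D.
    { apply (transfer _ _ _ _ _ _ _ _ _ _ PE').
      - move=> x y _. exact (cover _ _ _ _ H1 HA HBd x y).
      - move=> x y _. exists x, y. split; [exact I| reflexivity]. }
    exists (fun i => @HLine (A i) (B i) (C' i) (H1 i)).
    apply hyp_pts. exact PD.
  - move=> [H HH].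
    set A := fun i => hl_a (H i). set B := fun i => hl_b (H i). set C := fun i => hl_c (H i).
    have PD : prealizes indisk A B C D by (apply hyp_pts; exact HH).
    have H1 : forall i, C i * C i < A i * A i + B i * B i by (move=> i; exact (hl_meets (H i))).
    have Hnd : forall i, A i <> 0 \/ B i <> 0.
    { move=> i. apply NNPP => Hn. have := H1 i. have := Rle_0_sqr (C i). unfold Rsqr.
      have HA0 : A i = 0 by (apply NNPP => Ha; apply Hn; left; exact Ha).
      have HB0 : B i = 0 by (apply NNPP => Hb; apply Hn; right; exact Hb).
      rewrite HA0 HB0. lra. }
    have [HB HA] := from_pl _ _ _ _ _ _ _ HsL HL PD Hnd.
    have PE : prealizes (fun _ _ => True) A B C D.
    { apply (transfer _ _ _ _ _ _ _ _ _ _ PD).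
      - move=> x y _. exists x, y. split; [exact I| reflexivity].
      - move=> x y _. exact (cover _ _ _ _ H1 HA HB x y). }
    exists (fun i => @ELine (A i) (B i) (C i) (Hnd i)).
    apply euclid_pts. exact PE.
Qed.
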